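(* Let $A=(A_1,\dots,A_d)$ take values in $\{0,1\}^d$ with probabilities $p(a)>0$ for all $a$. For $b\in\{0,1\}^d$ define the linear interactions $\xi_b=\sum_{a\in\{0,1\}^d}(-1)^{a\cdot b}p(a)$ and the log-linear interactions $\lambda_b=2^{-d}\sum_{a\in\{0,1\}^d}(-1)^{a\cdot b}\log p(a)$, where $a\cdot b=\sum_v a_vb_v$. Then the following are equivalent: (1) $p$ is palindromic, i.e. $p(a)=p(\sim a)$ for all $a$; (2) $\xi_b=0$ for all $b$ with $|b|$ odd; (3) $\lambda_b=0$ for all $b$ with $|b|$ odd.
   Context: $\sim a$ denotes the complement of the binary vector $a$ ($(\sim a)_v=1-a_v$). For $b\in\{0,1\}^d$, $|b|=\sum_v b_v$ is its order; a vector $b$ is identified with the subset $\{v: b_v=1\}$ of $\{1,\dots,d\}$, and the interaction indexed by $b$ is called of odd or even order according to the parity of $|b|$. *)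

(* Defs.v *)
From mathcomp Require Import all_boot all_order all_algebra.
From mathcomp Require Import reals exp.
Set Implicit Arguments. Unset Strict Implicit. Unset Printing Implicit Defensive.
Import Order.TTheory GRing.Theory Num.Theory.
Local Open Scope ring_scope.

(* Binary vectors in {0,1}^d, coordinates indexed by 'I_d (v = 1..d shifted). *)
Definition bvec (d : nat) := {ffun 'I_d -> bool}.

Definition bcompl d (a : bvec d) : bvec d := [ffun v => ~~ a v].

Definition bdot d (a b : bvec d) : nat := \sum_(v < d) (a v && b v).

Definition border d (b : bvec d) : nat := \sum_(v < d) (b v : nat).

Definition xi (R : realType) d (p : bvec d -> R) (b : bvec d) : R :=
  \sum_(a : bvec d) (-1) ^+ (bdot a b) * p a.

Definition lambda (R : realType) d (p : bvec d -> R) (b : bvec d) : R :=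
  (2 ^+ d)^-1 * \sum_(a : bvec d) (-1) ^+ (bdot a b) * ln (p a).

Definition palindromic (R : realType) d (p : bvec d -> R) : Prop :=
  forall a : bvec d, p a = p (bcompl a).

(* Main.v *)
Require Import Defs.
From mathcomp Require Import all_boot all_order all_algebra.
From mathcomp Require Import reals exp.
From mathcomp Require Import lra.
Import Order.TTheory GRing.Theory Num.Theory.
Local Open Scope ring_scope.

Section Gen.
Variables (R : realType) (d : nat).

Lemma bcomplK : involutive (@bcompl d).
Proof. by move=> a; apply/ffunP=> v; rewrite !ffunE negbK. Qed.

Lemma sign_compl (a b : bvec d) :
  (-1) ^+ (bdot (bcompl a) b) = (-1) ^+ (border b) * (-1) ^+ (bdot a b) :> R.
Proof.
have <- : (bdot (bcompl a) b + bdot a b)%N = border b.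
  rewrite /bdot /border -big_split; apply: eq_bigr => v _.
  by rewrite ffunE; case: (a v); case: (b v).
by rewrite exprD -mulrA -exprD addnn -(signr_odd _ (_.*2)) odd_double mulr1.
Qed.

Definition FT (f : bvec d -> R) (b : bvec d) : R :=
  \sum_(a : bvec d) (-1) ^+ (bdot a b) * f a.

Lemma FT_compl f b :
  \sum_(a : bvec d) (-1) ^+ (bdot a b) * f (bcompl a) = (-1) ^+ (border b) * FT f b.
Proof.
rewrite (reindex_inj (inv_inj bcomplK)) /= /FT mulr_sumr; apply: eq_bigr => a _.
by rewrite bcomplK sign_compl mulrA.
Qed.

Lemma orth (a c : bvec d) :
  \sum_(b : bvec d) (-1) ^+ (bdot a b) * (-1) ^+ (bdot c b) =
  if a == c then 2 ^+ d else 0 :> R.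
Proof.
have E : forall b : bvec d, (-1) ^+ (bdot a b) * (-1) ^+ (bdot c b) =
   \prod_(v < d) (-1) ^+ ((a v && b v) + (c v && b v))%N :> R.
  by move=> b; rewrite -exprD /bdot -big_split /= expr_sum.
rewrite (eq_bigr _ (fun b _ => E b)).
rewrite -(bigA_distr_bigA (fun v (x : bool) => (-1) ^+ ((a v && x) + (c v && x))%N : R)).
have T : forall v : 'I_d, \sum_(x : bool) (-1) ^+ ((a v && x) + (c v && x))%N =
   if a v == c v then 2 else 0 :> R.
  by move=> v; rewrite big_bool /=; case: (a v); case: (c v);
     rewrite /= ?expr0 ?expr1 ?expr2; lra.
rewrite (eq_bigr _ (fun v _ => T v)).
case: eqP => [<-|/eqP nac].
  by rewrite (eq_bigr (fun _ => 2)) ?prodr_const ?card_ord // => v _; rewrite eqxx.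
have [v hv] : exists v, a v != c v.
  apply/existsP; apply: contraR nac; rewrite negb_exists => /forallP H.
  by apply/eqP/ffunP => v; move: (H v); rewrite negbK => /eqP.
by rewrite (bigD1 v) //= (negbTE hv) mul0r.
Qed.

Lemma inversion (g : bvec d -> R) :
  (forall b, FT g b = 0) -> forall a, g a = 0.
Proof.
move=> H a0.
have : \sum_(b : bvec d) (-1) ^+ (bdot a0 b) * FT g b = 0.
  by apply: big1 => b _; rewrite H mulr0.
under eq_bigr => b _ do rewrite /FT mulr_sumr.
rewrite exchange_big /=.
under eq_bigr => a _ do under eq_bigr => b _ do rewrite mulrA (mulrC ((-1) ^+ _)).
under eq_bigr => a _ do rewrite -mulr_suml orth.
rewrite (bigD1 a0) //= eqxx big1 ?addr0; last first.
  by move=> a /negbTE ->; rewrite mul0r.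
move/eqP; rewrite mulf_eq0 expf_eq0 pnatr_eq0 andbF /= => /eqP //.
Qed.

Lemma pal_FT (f : bvec d -> R) :
  (forall a, f a = f (bcompl a)) <-> (forall b, odd (border b) -> FT f b = 0).
Proof.
split.
  move=> H b ob.
  have := FT_compl f b.
  under eq_bigr => a _ do rewrite -H.
  rewrite -signr_odd ob expr1 -/(FT f b) => e; lra.
move=> H.
have G : forall b, FT (fun a => f a - f (bcompl a)) b = 0.
  move=> b; rewrite /FT.
  under eq_bigr => a _ do rewrite mulrBr.
  rewrite sumrB FT_compl -/(FT f b) -signr_odd.
  case ob: (odd (border b)); first by rewrite H // mulr0 subrr.
  by rewrite (_ : (-1) ^+ false = 1 :> R) // mul1r subrr.
move=> a; have := @inversion _ G a; move/eqP; rewrite subr_eq0 => /eqP; exact.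
Qed.

End Gen.
Arguments FT {R d}.

Theorem proposition2p2 (R : realType) (d : nat) (p : bvec d -> R)
  (p_pos : forall a, 0 < p a) (p_sum : \sum_(a : bvec d) p a = 1) :
  [/\ (palindromic p <-> (forall b : bvec d, odd (border b) -> xi p b = 0)),
      (palindromic p <-> (forall b : bvec d, odd (border b) -> lambda p b = 0)) &
      ((forall b : bvec d, odd (border b) -> xi p b = 0) <->
       (forall b : bvec d, odd (border b) -> lambda p b = 0))].
Proof.
have H1 : palindromic p <-> (forall b : bvec d, odd (border b) -> xi p b = 0).
  exact (@pal_FT R d p).
have H2 : palindromic p <-> (forall b : bvec d, odd (border b) -> lambda p b = 0).
  have e : forall b, lambda p b = (2 ^+ d)^-1 * FT (fun a => ln (p a)) b by move=> b; reflexivity.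
  have n0 : (2 ^+ d)^-1 != 0 :> R by rewrite invr_eq0 expf_eq0 pnatr_eq0 andbF.
  have L : (forall b : bvec d, odd (border b) -> lambda p b = 0) <->
           (forall b, odd (border b) -> FT (fun a => ln (p a)) b = 0).
    split=> H b ob; move: (H b ob); rewrite e.
      by move/eqP; rewrite mulf_eq0 (negbTE n0) /= => /eqP.
    by move->; rewrite mulr0.
  rewrite L -(@pal_FT R d) /palindromic; split=> H a; first by rewrite H.
  by apply: ln_inj; rewrite ?posrE ?p_pos.
split; [exact H1 | exact H2 | ]; tauto.
Qed.
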